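(* For every integer $n\geq 8$, $$\dot{\imath}_{[1,2]}(P_8\Box P_n)=\begin{cases} 16 & \text{if } n=8,\\ \left\lfloor \frac{15n+16}{8}\right\rfloor & \text{otherwise.}\end{cases}$$
   Context: $P_k$ denotes the path on $k$ vertices and $P_m\Box P_n$ the Cartesian product of two paths (the $m\times n$ grid graph). A set $S$ of vertices of a graph $G$ is independent if no two vertices of $S$ are adjacent, and dominating if every vertex not in $S$ has at least one neighbor in $S$. An independent $[1,2]$-set of $G$ is an independent dominating set $S$ such that every vertex $v\in V(G)\setminus S$ has at least one and at most two neighbors in $S$. When $G$ has an independent $[1,2]$-set, $\dot{\imath}_{[1,2]}(G)$ denotes the minimum cardinality of an independent $[1,2]$-set of $G$ (the statement includes the existence of such a set). *)

(* Defs.v *)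
From mathcomp Require Import all_boot.
Set Implicit Arguments. Unset Strict Implicit. Unset Printing Implicit Defensive.

Definition independent (T : finType) (adj : rel T) (S : {set T}) : Prop :=
  forall x y, x \in S -> y \in S -> ~~ adj x y.

Definition dominating (T : finType) (adj : rel T) (S : {set T}) : Prop :=
  forall v, v \notin S -> exists2 u, u \in S & adj v u.

Definition indep12_set (T : finType) (adj : rel T) (S : {set T}) : Prop :=
  [/\ independent adj S, dominating adj S &
      forall v, v \notin S -> 1 <= #|[set u in S | adj v u]| <= 2].

Definition indep12_number_is (T : finType) (adj : rel T) (k : nat) : Prop :=
  (exists2 S : {set T}, indep12_set adj S & #|S| = k) /\
  (forall S : {set T}, indep12_set adj S -> k <= #|S|).

Definition grid_adj (m n : nat) : rel ('I_m * 'I_n) :=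
  fun x y =>
    ((val x.1 == val y.1) && (((val x.2).+1 == val y.2) || ((val y.2).+1 == val x.2)))
    || ((val x.2 == val y.2) && (((val x.1).+1 == val y.1) || ((val y.1).+1 == val x.1))).

(* Main.v *)
Require Import Defs.
From mathcomp Require Import all_boot zify.
Set Implicit Arguments. Unset Strict Implicit. Unset Printing Implicit Defensive.


Definition zero : seq bool := nseq 8 false.
Definition bt (c : seq bool) (r : nat) : bool := nth false c r.
Definition cnt (p c x : seq bool) (r : nat) : nat :=
  bt p r + bt x r + bt c r.+1 + ((0 < r) && bt c r.-1).
Definition rowok (p c x : seq bool) (r : nat) : bool :=
  [&& ~~ (bt c r && bt c r.+1), ~~ (bt c r && bt x r) &
      (bt c r || (0 < cnt p c x r <= 2))].
Definition okc p c x := all (rowok p c x) (iota 0 8).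
Definition indepcol c := all (fun r => ~~ (bt c r && bt c r.+1)) (iota 0 8).
Fixpoint allseqs k : seq (seq bool) :=
  if k is k'.+1 then [seq b :: s | b <- [:: true; false], s <- allseqs k'] else [:: [::]].
Definition C : seq (seq bool) := [:: [:: true; false; true; false; true; false; true; false];
 [:: true; false; true; false; true; false; false; true];
 [:: true; false; true; false; true; false; false; false];
 [:: true; false; true; false; false; true; false; true];
 [:: true; false; true; false; false; true; false; false];
 [:: true; false; true; false; false; false; true; false];
 [:: true; false; true; false; false; false; false; true];
 [:: true; false; true; false; false; false; false; false];
 [:: true; false; false; true; false; true; false; true];
 [:: true; false; false; true; false; true; false; false];
 [:: true; false; false; true; false; false; true; false];
 [:: true; false; false; true; false; false; false; true];
 [:: true; false; false; true; false; false; false; false];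
 [:: true; false; false; false; true; false; true; false];
 [:: true; false; false; false; true; false; false; true];
 [:: true; false; false; false; true; false; false; false];
 [:: true; false; false; false; false; true; false; true];
 [:: true; false; false; false; false; true; false; false];
 [:: true; false; false; false; false; false; true; false];
 [:: true; false; false; false; false; false; false; true];
 [:: true; false; false; false; false; false; false; false];
 [:: false; true; false; true; false; true; false; true];
 [:: false; true; false; true; false; true; false; false];
 [:: false; true; false; true; false; false; true; false];
 [:: false; true; false; true; false; false; false; true];
 [:: false; true; false; true; false; false; false; false];
 [:: false; true; false; false; true; false; true; false];
 [:: false; true; false; false; true; false; false; true];
 [:: false; true; false; false; true; false; false; false];
 [:: false; true; false; false; false; true; false; true];
 [:: false; true; false; false; false; true; false; false];
 [:: false; true; false; false; false; false; true; false];
 [:: false; true; false; false; false; false; false; true];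
 [:: false; true; false; false; false; false; false; false];
 [:: false; false; true; false; true; false; true; false];
 [:: false; false; true; false; true; false; false; true];
 [:: false; false; true; false; true; false; false; false];
 [:: false; false; true; false; false; true; false; true];
 [:: false; false; true; false; false; true; false; false];
 [:: false; false; true; false; false; false; true; false];
 [:: false; false; true; false; false; false; false; true];
 [:: false; false; true; false; false; false; false; false];
 [:: false; false; false; true; false; true; false; true];
 [:: false; false; false; true; false; true; false; false];
 [:: false; false; false; true; false; false; true; false];
 [:: false; false; false; true; false; false; false; true];
 [:: false; false; false; true; false; false; false; false];
 [:: false; false; false; false; true; false; true; false];
 [:: false; false; false; false; true; false; false; true];
 [:: false; false; false; false; true; false; false; false];
 [:: false; false; false; false; false; true; false; true];
 [:: false; false; false; false; false; true; false; false];
 [:: false; false; false; false; false; false; true; false];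
 [:: false; false; false; false; false; false; false; true];
 [:: false; false; false; false; false; false; false; false]].
Arguments C : simpl never.
Arguments zero : simpl never.
Lemma C_def : C = [seq c <- allseqs 8 | indepcol c].
Proof. by vm_compute. Qed.
Definition pc (c : seq bool) := count id c.
Definition addopt (x : option nat) k : option nat := if x is Some v then Some (v + k) else None.
Definition minopt2 (x y : option nat) :=
  match x, y with Some a, Some b => Some (minn a b) | Some a, None => Some a | None, y => y end.
Definition minopt (l : seq (option nat)) := foldr minopt2 None l.
Definition get (d : seq (seq (option nat))) (a b : seq bool) :=
  nth None (nth [::] d (index b C)) (index a C).
Definition trans (b c a : seq bool) (v : option nat) : option nat :=
  if v is Some k then (if okc a b c then Some (k + pc c) else None) else None.
Definition stepval (row : seq (option nat)) b c :=
  minopt [seq trans b c x.1 x.2 | x <- zip C row].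
Definition step (d : seq (seq (option nat))) :=
  [seq [seq stepval x.2 x.1 c | x <- zip C d] | c <- C].
Definition D1 := [seq [seq (if a == zero then Some (pc b) else None) | a <- C] | b <- C].
Definition D k := iter k.-1 step D1.
Definition Fval d := minopt [seq (if okc a b zero then get d a b else None) | a <- C, b <- C].
Definition shiftopt k (x : option nat) := addopt x k.
Definition shift k (d : seq (seq (option nat))) := [seq [seq shiftopt k x | x <- l] | l <- d].
Definition formula n := if n == 8 then 16 else (15 * n + 16) %/ 8.
Fixpoint Dlist k d := if k is k'.+1 then d :: Dlist k' (step d) else [::].


Definition bigcheck :=
  let L := Dlist 26 D1 in
  (nth [::] L 25 == shift 15 (nth [::] L 17)) &&
  all (fun n => Fval (nth [::] L n.-1) == Some (formula n)) (iota 8 18).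
Lemma bigcheckP : bigcheck.
Proof. vm_compute. reflexivity. Qed.


Lemma nth_Dlist m d i : i < m -> nth [::] (Dlist m d) i = iter i step d.
Proof.
elim: m d i => [|m IH] d [|i] //= lt; by rewrite IH // -iterSr.
Qed.

Lemma DS k : 0 < k -> D k.+1 = step (D k).
Proof. by case: k. Qed.

Lemma D_nth k : 0 < k -> k <= 26 -> D k = nth [::] (Dlist 26 D1) k.-1.
Proof. by case: k => // k _ lt; rewrite nth_Dlist. Qed.

Lemma Cuniq : uniq C. Proof. by vm_compute. Qed.
Lemma zeroC : zero \in C. Proof. by vm_compute. Qed.

Definition wf (d : seq (seq (option nat))) :=
  (size d == size C) && all (fun l => size l == size C) d.

Lemma wf_step d : wf d -> wf (step d).
Proof.
case/andP => /eqP sd _.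
apply/andP; split; first by rewrite /step size_map.
apply/allP => l /mapP [c _ ->].
by rewrite size_map size_zip sd minnn.
Qed.
Lemma wf_D1 : wf D1. Proof. by vm_compute. Qed.
Lemma wf_D k : wf (D k).
Proof. rewrite /D; case: k => [|k] /=; first exact: wf_D1.
by elim: k => [|k IH] /=; [exact: wf_D1 | exact: wf_step]. Qed.

Lemma get_out d a b : wf d -> (a \notin C) || (b \notin C) -> get d a b = None.
Proof.
case/andP => /eqP sd /allP sl /orP [aC|bC]; rewrite /get.
  have [ib|ib] := ltnP (index b C) (size d).
    rewrite nth_default //; have /eqP -> := sl _ (mem_nth [::] ib).
    by rewrite leqNgt index_mem.
  by rewrite (nth_default [::] ib) nth_nil.
have ib : size d <= index b C by rewrite sd leqNgt index_mem.
by rewrite (nth_default [::] ib) nth_nil.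
Qed.

Lemma minopt_le l x : Some x \in l -> exists2 m, minopt l = Some m & m <= x.
Proof.
elim: l => //= y l IH; rewrite in_cons => /orP [/eqP <-|/IH [m -> le]].
  case: (minopt l) => [m|] /=; last by exists x.
  by exists (minn x m) => //; rewrite geq_minl.
case: y => [y|] /=; last by exists m.
by exists (minn y m) => //; rewrite geq_min le orbT.
Qed.

Lemma minopt_some l m : minopt l = Some m -> Some m \in l.
Proof.
elim: l m => //= y l IH m; case: y => [y|] /=; last by move/IH => h; rewrite in_cons h orbT.
case E: (minopt l) => [z|] /= [<-]; rewrite in_cons; last by rewrite eqxx.
rewrite /minn; case: ifP => _; first by rewrite eqxx.
by rewrite (IH _ E) orbT.
Qed.

Lemma minopt_shift k l : minopt (map (shiftopt k) l) = shiftopt k (minopt l).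
Proof.
elim: l => //= y l ->; case: y => [y|]; case: (minopt l) => [z|] //=.
by rewrite /minn ltn_add2r; case: ifP.
Qed.

Lemma get_step d b c : wf d -> b \in C -> c \in C ->
  get (step d) b c = minopt [seq trans b c a (get d a b) | a <- C].
Proof.
case/andP => /eqP sd /allP sl bC cC.
rewrite /get /step (nth_map zero) ?index_mem // nth_index //.
rewrite (nth_map (zero, [::])) ?size_zip ?sd ?minnn ?index_mem //.
rewrite nth_zip ?sd //.
rewrite -[(_, _).1]/(nth zero C (index b C)) -[(_, _).2]/(nth [::] d (index b C)) nth_index //.
have szr : size (nth [::] d (index b C)) = size C.
  by apply/eqP/sl/mem_nth; rewrite sd index_mem.
rewrite /stepval; congr minopt; apply: (@eq_from_nth _ None); first by rewrite !size_map size_zip szr minnn.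
move=> i; rewrite size_map size_zip szr minnn => iC.
rewrite (nth_map (zero, None)) ?size_zip ?szr ?minnn // nth_zip //.
by rewrite (nth_map zero) // index_uniq // Cuniq.
Qed.

Lemma get_D1 a b : a \in C -> b \in C -> get D1 a b = if a == zero then Some (pc b) else None.
Proof.
move=> aC bC; rewrite /get /D1 (nth_map zero) ?index_mem // (nth_map zero) ?index_mem //.
by rewrite !nth_index.
Qed.

Lemma get_shift k d a b : get (shift k d) a b = shiftopt k (get d a b).
Proof.
rewrite /get /shift; set i := index b C; set j := index a C.
have [ii|ii] := ltnP i (size d).
  rewrite (nth_map [::]) //; set l := nth [::] d i.
  have [jj|jj] := ltnP j (size l); first by rewrite (nth_map None).
  by rewrite !nth_default ?size_map.
by rewrite !nth_default ?size_map.
Qed.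

(* words, reversed *)
Fixpoint pv (w : seq (seq bool)) : bool :=
  match w with
  | [::] => true
  | c :: w' => [&& c \in C, pv w' & (if w' is b :: w'' then okc (head zero w'') b c else true)]
  end.
Definition stateof (w : seq (seq bool)) :=
  match w with c :: a :: _ => (a, c) | [:: c] => (zero, c) | [::] => (zero, zero) end.
Definition full w := pv w && okc (stateof w).1 (stateof w).2 zero.
Definition cost (w : seq (seq bool)) := sumn (map pc w).

Lemma stateof_cons c w : stateof (c :: w) = (head zero w, c).
Proof. by case: w. Qed.

Lemma stateC w : pv w -> w != [::] -> ((stateof w).1 \in C) && ((stateof w).2 \in C).
Proof.
case: w => // c [|b w] /=; first by rewrite andbT.
by case/and3P => -> /and3P [-> _ _].
Qed.

Lemma Lbound w : pv w -> w != [::] ->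
  exists2 v, get (D (size w)) (stateof w).1 (stateof w).2 = Some v & v <= cost w.
Proof.
elim: w => // c w IH /= /and3P [cC pw ok] _.
case: w IH pw ok => [|b w] IH pw ok.
  by exists (pc c); rewrite ?get_D1 ?zeroC ?eqxx // /cost /= addn0.
have [v gv le] := IH pw isT.
have /andP [aC bC] := stateC pw isT.
rewrite stateof_cons in gv aC bC *; rewrite /= in gv aC bC *.
rewrite DS // get_step ?wf_D //.
have : Some (v + pc c) \in [seq trans b c a (get (D (size w).+1) a b) | a <- C].
  by apply/mapP; exists (head zero w) => //; rewrite gv /trans ok.
case/minopt_le => m -> le2; exists m => //.
have -> : cost [:: c, b & w] = pc c + cost (b :: w) by [].
by apply: (leq_trans le2); rewrite addnC leq_add2l.
Qed.

Lemma Ubound k a b v : 0 < k -> get (D k) a b = Some v ->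
  exists w, [/\ pv w, size w = k, stateof w = (a, b) & cost w = v].
Proof.
elim: k a b v => // k IH a b v _.
have [aC|aC] := boolP (a \in C); last by rewrite get_out ?wf_D ?aC.
have [bC|bC] := boolP (b \in C); last by rewrite get_out ?wf_D ?bC ?orbT.
case: k IH => [|k] IH.
  rewrite /= get_D1 //; case: eqP => // -> [<-].
  by exists [:: b]; rewrite /= bC /cost /= addn0.
rewrite DS // get_step ?wf_D // => /minopt_some /mapP [a' a'C].
rewrite /trans; case E: (get _ a' a) => [v'|] //; case: ifP => // ok [->].
have [w [pw sw st cw]] := IH _ _ _ isT E.
exists (b :: w); split.
- rewrite /= bC pw /=; case: w pw sw st {cw E} => // b' w' _ _.
  by rewrite stateof_cons => -[-> ->].
- by rewrite /= sw.
- rewrite stateof_cons; case: w {pw cw E} sw st => // b' w' _.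
  by rewrite stateof_cons => -[_ ->].
- have -> : cost (b :: w) = pc b + cost w by [].
  by rewrite cw addnC.
Qed.


Lemma Fval_shift k d d' : (forall a b, get d' a b = shiftopt k (get d a b)) ->
  Fval d' = shiftopt k (Fval d).
Proof.
move=> h; rewrite /Fval -minopt_shift map_allpairs; congr minopt.
by apply: eq_allpairs => a b; rewrite h; case: (okc a b zero).
Qed.

Lemma stepR k d d' : wf d -> wf d' -> (forall a b, get d' a b = shiftopt k (get d a b)) ->
  forall a b, get (step d') a b = shiftopt k (get (step d) a b).
Proof.
move=> wd wd' h b c.
have [bC|bC] := boolP (b \in C); last by rewrite !get_out ?wf_step ?bC.
have [cC|cC] := boolP (c \in C); last by rewrite !get_out ?wf_step ?cC ?orbT.
rewrite !get_step // -minopt_shift -map_comp; congr minopt; apply: eq_map => a /=.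
rewrite h /trans; case: (get d a b) => [v|] //=; case: (okc a b c) => //=.
by rewrite /shiftopt /addopt addnAC.
Qed.

Lemma periodic j a b : get (D (26 + j)) a b = shiftopt 15 (get (D (18 + j)) a b).
Proof.
elim: j a b => [|j IH] a b.
  have eP : nth [::] (Dlist 26 D1) 25 = shift 15 (nth [::] (Dlist 26 D1) 17).
    by case/andP: bigcheckP => /eqP H _; exact H.
  rewrite !addn0 (D_nth (k := 26) isT isT) (D_nth (k := 18) isT isT) eP.
  exact: get_shift.
rewrite !addnS (DS (k := 26 + j)) ?(DS (k := 18 + j)) //.
exact: (stepR (wf_D _) (wf_D _) IH).
Qed.

Lemma formulaS m : 18 <= m -> formula (m + 8) = formula m + 15.
Proof.
move=> h; rewrite /formula.
have -> : (m + 8 == 8) = false by apply/eqP; lia.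
have -> : (m == 8) = false by apply/eqP; lia.
have -> : 15 * (m + 8) + 16 = 15 * 8 + (15 * m + 16) by lia.
by rewrite divnMDl // addnC.
Qed.

Lemma FD n : 8 <= n -> Fval (D n) = Some (formula n).
Proof.
elim: n {-2}n (leqnn n) => [|N IH] n le h; first by lia.
have [lt|ge] := ltnP n 26.
  have /andP [_ /allP al] := bigcheckP.
  have : n \in iota 8 18 by rewrite mem_iota; apply/andP; split; lia.
  move/al/eqP; have e : D n = nth [::] (Dlist 26 D1) n.-1 by apply: D_nth; lia.
  by rewrite e.
have e1 : n = 26 + (n - 26) by lia.
have e2 : Fval (D n) = shiftopt 15 (Fval (D (18 + (n - 26)))).
  rewrite {1}e1; apply: Fval_shift => a b; exact: periodic.
rewrite e2 IH; [|lia|lia].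
rewrite /shiftopt /addopt -formulaS; last by lia.
by congr (Some (formula _)); lia.
Qed.

Lemma lowerW w n : full w -> size w = n -> 8 <= n -> formula n <= cost w.
Proof.
case/andP => pw ok sw h.
have wn : w != [::] by case: w sw pw ok => //= _ <-.
have [v gv le] := Lbound pw wn.
have /andP [aC bC] := stateC pw wn.
have : Some v \in [seq (if okc a b zero then get (D n) a b else None) | a <- C, b <- C].
  apply/allpairsP; exists ((stateof w).1, (stateof w).2); split => //=.
  by rewrite ok -sw gv.
case/minopt_le => m; rewrite -/(Fval (D n)) FD // => -[->] lm.
exact: leq_trans lm le.
Qed.

Lemma upperW n : 8 <= n -> exists w, [/\ full w, size w = n & cost w = formula n].
Proof.
move=> h; have := FD h; rewrite /Fval => /minopt_some /allpairsP [[a b] /= [aC bC]].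
case: ifP => // ok /esym E.
have [w [pw sw st cw]] := Ubound (leq_trans (isT : 0 < 8) h) E.
by exists w; split => //; rewrite /full pw st.
Qed.


Definition bitn n (S : {set 'I_8 * 'I_n}) (r j : nat) : bool :=
  [exists u in S, (val u.1 == r) && (val u.2 == j)].

Lemma bitn_outr n (S : {set 'I_8 * 'I_n}) r j : 8 <= r -> bitn S r j = false.
Proof.
move=> h; apply/existsP => -[u /andP [_ /andP [/eqP e _]]].
by have := ltn_ord u.1; rewrite e; lia.
Qed.

Lemma bitn_outc n (S : {set 'I_8 * 'I_n}) r j : n <= j -> bitn S r j = false.
Proof.
move=> h; apply/existsP => -[u /andP [_ /andP [_ /eqP e]]].
by have := ltn_ord u.2; rewrite e; lia.
Qed.

Lemma bitn_in n (S : {set 'I_8 * 'I_n}) r j (hr : r < 8) (hj : j < n) :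
  bitn S r j = ((Ordinal hr, Ordinal hj) \in S).
Proof.
apply/existsP/idP => [[u /andP [uS /andP [/eqP e1 /eqP e2]]]|h].
  have -> : (Ordinal hr, Ordinal hj) = u; last by [].
  by case: u uS e1 e2 => x y /= _ e1 e2; congr pair; apply: val_inj; rewrite /= ?e1 ?e2.
by exists (Ordinal hr, Ordinal hj); rewrite h !eqxx.
Qed.

Lemma bitn_ord n (S : {set 'I_8 * 'I_n}) (u : 'I_8 * 'I_n) :
  bitn S (val u.1) (val u.2) = (u \in S).
Proof.
case: u => x y; rewrite (bitn_in _ (ltn_ord x) (ltn_ord y)).
by congr (_ \in S); congr pair; apply: val_inj.
Qed.

Lemma ident (s : bool) (a b r j : nat) :
  (s && (((r == a) && ((j.+1 == b) || (b.+1 == j))) || ((j == b) && ((r.+1 == a) || (a.+1 == r))))) =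
  (s && ((a == r) && (b.+1 == j))) + (s && ((a == r) && (b == j.+1))) + (s && ((a == r.+1) && (b == j)))
  + (s && ((a.+1 == r) && (b == j))) :> nat.
Proof. case: s => //=; by do !case: eqP => /= ?; try lia. Qed.

Lemma pt1 n (S : {set 'I_8 * 'I_n}) a b :
  \sum_(u : 'I_8 * 'I_n) ((u \in S) && ((val u.1 == a) && (val u.2 == b)) : nat) = bitn S a b.
Proof.
rewrite /bitn; case: existsP => [[u0 /andP [u0S /andP [/eqP h1 /eqP h2]]]|nex].
  rewrite (bigD1 u0) /= ?u0S ?h1 ?h2 ?eqxx // big1 ?addn0 // => u neq.
  apply/eqP; rewrite eqb0; apply/negP => /andP [_ /andP [/eqP e1 /eqP e2]].
  move/eqP: neq; apply.
  by case: u u0 {u0S} e1 e2 h1 h2 => [x y] [x0 y0] /= e1 e2 h1 h2; congr pair; apply: val_inj; rewrite /= ?e1 ?h1 ?e2 ?h2.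
rewrite big1 // => u _; apply/eqP; rewrite eqb0; apply/negP => /andP [uS /andP [e1 e2]].
by apply: nex; exists u; apply/and3P; split.
Qed.

Lemma ptS n (S : {set 'I_8 * 'I_n}) a b :
  \sum_(u : 'I_8 * 'I_n) ((u \in S) && ((val u.1 == a) && ((val u.2).+1 == b)) : nat) =
  (if b is b'.+1 then bitn S a b' else false).
Proof.
case: b => [|b]; last by rewrite -pt1; apply: eq_bigr => u _; rewrite eqSS.
by rewrite big1 // => u _ /=; rewrite ?andbF.
Qed.

Lemma pt4 n (S : {set 'I_8 * 'I_n}) a b :
  \sum_(u : 'I_8 * 'I_n) ((u \in S) && (((val u.1).+1 == a) && (val u.2 == b)) : nat) =
  (if a is a'.+1 then bitn S a' b else false).
Proof.
case: a => [|a]; last by rewrite -pt1; apply: eq_bigr => u _; rewrite eqSS.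
by rewrite big1 // => u _ /=; rewrite ?andbF.
Qed.

Lemma card_nb n (S : {set 'I_8 * 'I_n}) (v : 'I_8 * 'I_n) :
  #|[set u in S | grid_adj v u]| =
  ((0 < val v.2) && bitn S (val v.1) (val v.2).-1) + bitn S (val v.1) (val v.2).+1 +
  bitn S (val v.1).+1 (val v.2) + ((0 < val v.1) && bitn S (val v.1).-1 (val v.2)).
Proof.
rewrite -sum1_card big_mkcond /=.
rewrite (eq_bigr (fun u : 'I_8 * 'I_n =>
   ((u \in S) && ((val u.1 == val v.1) && ((val u.2).+1 == val v.2)) : nat) +
   ((u \in S) && ((val u.1 == val v.1) && (val u.2 == (val v.2).+1))) +
   ((u \in S) && ((val u.1 == (val v.1).+1) && (val u.2 == val v.2))) +
   ((u \in S) && (((val u.1).+1 == val v.1) && (val u.2 == val v.2))))); last first.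
  by move=> u _; rewrite inE -ident; case: ((u \in S) && _).
by rewrite !big_split /= ptS pt1 pt1 pt4; case: (val v.1); case: (val v.2).
Qed.

Definition colS n (S : {set 'I_8 * 'I_n}) j : seq bool := mkseq (fun r => bitn S r j) 8.
Definition hp (h : nat -> seq bool) j := if j is j'.+1 then h j' else zero.

Lemma bt_col n (S : {set 'I_8 * 'I_n}) r j : bt (colS S j) r = bitn S r j.
Proof.
rewrite /bt /colS; case: (ltnP r 8) => h; first by rewrite nth_mkseq.
by rewrite nth_default ?size_mkseq // bitn_outr.
Qed.

Lemma bt_zero r : bt zero r = false.
Proof. by rewrite /bt /zero nth_nseq; case: ifP. Qed.

Lemma bt_hp n (S : {set 'I_8 * 'I_n}) r j :
  bt (hp (colS S) j) r = (0 < j) && bitn S r j.-1.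
Proof. by case: j => [|j] /=; rewrite ?bt_zero ?bt_col. Qed.

Lemma size_colS n (S : {set 'I_8 * 'I_n}) j : size (colS S j) = 8.
Proof. by rewrite size_mkseq. Qed.

Lemma colS_out n (S : {set 'I_8 * 'I_n}) j : n <= j -> colS S j = zero.
Proof.
move=> h; apply: (@eq_from_nth _ false); first by rewrite size_colS size_nseq.
move=> i _; change (bt (colS S j) i = bt zero i).
by rewrite bt_col bt_zero bitn_outc.
Qed.

Lemma indep1 n (S : {set 'I_8 * 'I_n}) : independent (@grid_adj 8 n) S ->
  forall r j, ~~ (bitn S r j && bitn S r.+1 j) && ~~ (bitn S r j && bitn S r j.+1).
Proof.
move=> hI r j; apply/andP; split; apply/negP =>
  /andP [/existsP [u /andP [uS /andP [/eqP e1 /eqP e2]]] /existsP [u' /andP [u'S /andP [/eqP e1' /eqP e2']]]];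
  move: (hI u u' uS u'S); rewrite /grid_adj e1 e2 e1' e2' !eqxx ?orbT //.
Qed.

Lemma indep2 n (S : {set 'I_8 * 'I_n}) :
  (forall r j, ~~ (bitn S r j && bitn S r.+1 j) && ~~ (bitn S r j && bitn S r j.+1)) ->
  independent (@grid_adj 8 n) S.
Proof.
move=> h x y xS yS; apply/negP; rewrite /grid_adj.
rewrite -(bitn_ord S x) in xS; rewrite -(bitn_ord S y) in yS.
case/orP => /andP [/eqP e /orP [/eqP e'|/eqP e']].
- by move: (h (val x.1) (val x.2)); rewrite xS e e' yS andbF.
- by move: (h (val y.1) (val y.2)); rewrite yS -e e' xS andbF.
- by move: (h (val x.1) (val x.2)); rewrite xS e e' yS.
- by move: (h (val y.1) (val y.2)); rewrite yS -e e' xS.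
Qed.

Lemma char1 n (S : {set 'I_8 * 'I_n}) : indep12_set (@grid_adj 8 n) S ->
  forall j, j < n -> okc (hp (colS S) j) (colS S j) (colS S j.+1).
Proof.
case=> hI _ hC j jn; have hi := indep1 hI.
apply/allP => r; rewrite mem_iota add0n => /andP [_ r8].
rewrite /rowok /cnt !bt_col bt_hp.
have /andP [-> ->] := hi r j.
case E: (bitn S r j) => //=.
have := hC (Ordinal r8, Ordinal jn); rewrite -(bitn_ord S) /= E => /(_ isT).
by rewrite card_nb /=.
Qed.

Lemma char2 n (S : {set 'I_8 * 'I_n}) :
  (forall j, j < n -> okc (hp (colS S) j) (colS S j) (colS S j.+1)) -> indep12_set (@grid_adj 8 n) S.
Proof.
move=> h.
have rw : forall r j, r < 8 -> j < n -> rowok (hp (colS S) j) (colS S j) (colS S j.+1) r.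
  by move=> r j r8 jn; apply: (allP (h j jn)); rewrite mem_iota.
have hi : forall r j, ~~ (bitn S r j && bitn S r.+1 j) && ~~ (bitn S r j && bitn S r j.+1).
  move=> r j; case: (ltnP r 8) => r8; last by rewrite bitn_outr.
  case: (ltnP j n) => jn; last by rewrite bitn_outc.
  by have := rw r j r8 jn; rewrite /rowok !bt_col => /and3P [-> -> _].
have hc : forall v, v \notin S -> 0 < #|[set u in S | grid_adj v u]| <= 2.
  move=> v vS; have := rw _ _ (ltn_ord v.1) (ltn_ord v.2).
  rewrite -(bitn_ord S v) in vS.
  rewrite /rowok /cnt !bt_col bt_hp (negbTE vS) /= => H; rewrite card_nb; exact H.
split; [exact: indep2 hi | | exact: hc].
move=> v vS; have /andP [c1 _] := hc v vS.
have /set0Pn [u] : [set u in S | grid_adj v u] != set0 by rewrite -card_gt0.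
by rewrite inE => /andP [uS a]; exists u.
Qed.


Lemma mem_allseqs k s : (s \in allseqs k) = (size s == k).
Proof.
elim: k s => [|k IH] s.
  by case: s => [|b s]; rewrite ?inE.
rewrite (_ : allseqs k.+1 = [seq b :: s | b <- [:: true; false], s <- allseqs k]) //.
apply/allpairsP/idP => [[[b' s'] /= [_ s'in ->]]|h].
  by rewrite /= eqSS -IH.
case: s h => [|b s] //= h; exists (b, s); split => //=; [by case: b | by rewrite IH].
Qed.

Lemma memC c : (c \in C) = (size c == 8) && indepcol c.
Proof. by rewrite C_def mem_filter mem_allseqs andbC. Qed.

Lemma okc_indep p c x : okc p c x -> indepcol c.
Proof. by apply: sub_all => r /and3P []. Qed.

Fixpoint mkw (h : nat -> seq bool) k := if k is k'.+1 then h k' :: mkw h k' else [::].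

Lemma size_mkw h k : size (mkw h k) = k.
Proof. by elim: k => //= k ->. Qed.

Lemma head_mkw h k : head zero (mkw h k) = hp h k.
Proof. by case: k. Qed.

Lemma stateof_mkw h k : stateof (mkw h k.+1) = (hp h k, h k).
Proof. by change (stateof (h k :: mkw h k) = (hp h k, h k)); rewrite stateof_cons head_mkw. Qed.

Lemma mkw_ext h h' k : (forall j, j < k -> h j = h' j) -> mkw h k = mkw h' k.
Proof.
elim: k => //= k IH e; rewrite e // IH // => j jk; apply: e; lia.
Qed.

Lemma pv_mkw h k : (forall j, j < k -> h j \in C) ->
  (forall j, j.+1 < k -> okc (hp h j) (h j) (h j.+1)) -> pv (mkw h k).
Proof.
elim: k => // k IH hC hO /=.
rewrite hC // IH; first last.
- by move=> j jk; apply: hO; lia.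
- by move=> j jk; apply: hC; lia.
case: k {IH} hC hO => //= k hC hO; rewrite head_mkw; exact: hO.
Qed.

Lemma pv_mkw_inv h k : pv (mkw h k) ->
  (forall j, j < k -> h j \in C) /\ (forall j, j.+1 < k -> okc (hp h j) (h j) (h j.+1)).
Proof.
elim: k => [|k IH] /=; first by split=> j.
case/and3P => hk /IH [IC IO] hl; split => j jk.
  have [jk'|kj] := ltnP j k; first exact: IC.
  by have -> : j = k by lia.
have [jk'|kj] := ltnP j.+1 k; first exact: IO.
have e : k = j.+1 by lia.
by move: hl; rewrite e /= head_mkw.
Qed.

Lemma cost_mkw h k : cost (mkw h k) = \sum_(j < k) pc (h j).
Proof.
elim: k => [|k IH]; first by rewrite big_ord0.
have -> : cost (mkw h k.+1) = pc (h k) + cost (mkw h k) by [].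
by rewrite big_ord_recr IH addnC.
Qed.

Lemma mkw_nth w : w = mkw (fun j => nth zero w ((size w).-1 - j)) (size w).
Proof.
elim: w => //= c w IH; rewrite subnn /=; congr cons.
rewrite {1}IH; apply: mkw_ext => j jw.
have -> : size w - j = ((size w).-1 - j).+1 by lia.
by [].
Qed.

Lemma card_col n (S : {set 'I_8 * 'I_n}) : #|S| = \sum_(j < n) pc (colS S j).
Proof.
rewrite -sum1_card big_mkcond /=.
rewrite (eq_bigr (fun p : 'I_8 * 'I_n => if (p.1, p.2) \in S then 1 else 0)); last by case.
rewrite -(pair_bigA _ (fun i j => if (i, j) \in S then 1 else 0)) exchange_big.
apply: eq_bigr => j _.
rewrite (eq_bigr (fun i : 'I_8 => nat_of_bool (bitn S i j))); last first.
  by move=> i _; rewrite (bitn_ord S (i, j)); case: (_ \in S).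
rewrite /pc /colS /mkseq !big_ord_recr big_ord0 /=.
by rewrite add0n addn0 !addnA.
Qed.

Unset Implicit Arguments.
Theorem mainTheorem9 (n : nat) (hn : 8 <= n) :
  indep12_number_is (@grid_adj 8 n)
    (if n == 8 then 16 else (15 * n + 16) %/ 8).
Proof.
change (if n == 8 then 16 else (15 * n + 16) %/ 8) with (formula n).
have n0 : 0 < n by lia.
split.
- have [w [fw sw cw]] := upperW hn.
  pose h j := if j < n then nth zero w (n.-1 - j) else zero.
  have ew : w = mkw h n.
    rewrite {1}(mkw_nth w) sw; apply: mkw_ext => j jn; by rewrite /h jn.
  case/andP: fw => pw okf.
  rewrite ew in pw okf cw.
  have [hC hO] := pv_mkw_inv pw.
  have hsz : forall j, size (h j) = 8.
    move=> j; case: (ltnP j n) => jn; first by have := hC j jn; rewrite memC => /andP [/eqP].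
    by rewrite /h ltnNge jn.
  pose S := [set u : 'I_8 * 'I_n | bt (h (val u.2)) (val u.1)].
  have colh : forall j, colS S j = h j.
    move=> j; apply: (@eq_from_nth _ false); first by rewrite size_colS hsz.
    move=> i; rewrite size_colS => i8; change (bt (colS S j) i = bt (h j) i).
    rewrite bt_col; case: (ltnP j n) => jn.
      by rewrite (bitn_in _ i8 jn) inE.
    by rewrite bitn_outc // /h ltnNge jn /= bt_zero.
  have hph : forall j, hp (colS S) j = hp h j by case => [|j] //=; rewrite colh.
  exists S; last first.
    by rewrite card_col -cw cost_mkw; apply: eq_bigr => j _; rewrite colh.
  apply: char2 => j jn; rewrite hph !colh.
  have [jn'|jn'] := ltnP j.+1 n; first exact: hO.
  have e : n = j.+1 by lia.
  have ez : h j.+1 = zero by rewrite /h -e ltnn.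
  have em : mkw h n = mkw h j.+1 by rewrite -e.
  by move: okf; rewrite em stateof_mkw /= ez.
- move=> S hS; set h := colS S.
  have o := char1 hS.
  have hC : forall j, j < n -> h j \in C.
    by move=> j jn; rewrite memC size_colS eqxx (okc_indep (o j jn)).
  have pvw : pv (mkw h n) by apply: pv_mkw => // j jn; apply: o; lia.
  have fw : full (mkw h n).
    have ok1 := o n.-1 (ltac:(lia) : n.-1 < n).
    rewrite (prednK n0) /h (colS_out S (leqnn n)) in ok1.
    have em : mkw h n = mkw h n.-1.+1 by rewrite (prednK n0).
    by rewrite /full pvw em stateof_mkw.
  have := lowerW fw (size_mkw h n) hn.
  by rewrite cost_mkw -card_col.
Qed.
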